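(* For every tree $T\subseteq\mathbb{N}^{<\mathbb{N}}$, $[\mathcal{JT}^\omega(T)]=\{\mathcal{J}^\omega(Z):Z\in[T]\}$, where $\mathcal{JT}^\omega(T)=\{J^\omega(\sigma):\sigma\in T\}$.
   Context: A tree is a subset of $\mathbb{N}^{<\mathbb{N}}$ closed under initial segments; $[T]$ is its set of infinite paths. Strings are coded by natural numbers via a fixed computable coding with $\sigma\subsetneq\tau$ implying code$(\sigma)<$ code$(\tau)$. For $\sigma$ finite or infinite, $\{e\}^\sigma_t(n)\downarrow$ means the $e$-th machine on input $n$ with oracle $\sigma$ halts in fewer than $\min(|\sigma|,t)$ steps. For $Z\in\mathbb{N}^\mathbb{N}$: $t_{-1}=1$, $t_n=\max\{t_{n-1}+1,\mu t(\{n\}^Z_t(n)\downarrow)\}$ ($t_n=t_{n-1}+1$ if no such $t$), $\mathcal{J}(Z)(n)=Z\restriction t_n$, and $\mathcal{J}^\omega(Z)(n)=\mathcal{J}^{n+1}(Z)(0)$. For finite $\sigma$: $t_{-1}=1$, $t_n=\max\{t_{n-1}+1,\mu t(\{n\}^{\sigma\restriction t}(n)\downarrow)\}$ ($t_n=t_{n-1}+1$ if no such $t$), $J(\sigma)=\langle\sigma\restriction t_0,\dots,\sigma\restriction t_{k-1}\rangle$ with $k$ least such that $t_k>|\sigma|$; $J^m$ is the $m$-fold iterate; $J^\omega(\sigma)=\langle J(\sigma)(0),J^2(\sigma)(0),\dots,J^{n-1}(\sigma)(0)\rangle$ where $n$ is least with $J^n(\sigma)=\emptyset$. *)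

(* Defs.v *)
From mathcomp Require Import all_boot.
From Stdlib Require Import ClassicalEpsilon.

Set Implicit Arguments.
Unset Strict Implicit.
Unset Printing Implicit Defensive.

(* Finite strings of naturals are [seq nat]; sigma|t is [take t sigma];
   for Z : nat -> nat, Z|t is [mkseq Z t]. *)

Definition code (s : seq nat) : nat := CodeSeq.code s.

Lemma code_prefix_lt (s u : seq nat) : u != [::] -> code s < code (s ++ u).
Proof.
rewrite /code; elim: s => [|a s IH] /=.
  case: u => [|b u] //= _; rewrite muln_gt0 expn_gt0 //.
move=> /IH; rewrite ltn_pmul2l ?expn_gt0 // ltnS -!muln2 ltn_mul2r //.
Qed.

Definition is_tree (T : seq nat -> Prop) : Prop :=
  forall (s : seq nat) (n : nat), T s -> T (take n s).

Definition body (S : seq nat -> Prop) (f : nat -> nat) : Prop :=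
  forall n : nat, S (mkseq f n).

(* A machine model: [mrun e n o s] = "the e-th machine on input n with
   (partial) oracle o halts in fewer than s steps".  The only structural
   facts assumed are the standard ones: a computation of fewer than s
   steps can only query the oracle below s (use principle), and halting
   in fewer than s steps implies halting in fewer than s+1 steps. *)
Record machine_model := MachineModel {
  mrun : nat -> nat -> (nat -> option nat) -> nat -> bool;
  mrun_use : forall e n (o o' : nat -> option nat) s,
      (forall i, i < s -> o i = o' i) -> mrun e n o s = mrun e n o' s;
  mrun_mono : forall e n o s, mrun e n o s -> mrun e n o s.+1
}.

Definition fin_oracle (s : seq nat) : nat -> option nat :=
  fun i => if i < size s then Some (nth 0 s i) else None.

Definition inf_oracle (Z : nat -> nat) : nat -> option nat :=
  fun i => Some (Z i).

Definition halts_fin (M : machine_model) (e : nat) (sigma : seq nat) (t n : nat)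
  : bool := mrun M e n (fin_oracle sigma) (minn (size sigma) t).

(* {e}^sigma(n)| (no step bound): halts in fewer than |sigma| steps. *)
Definition halts_fin_nb (M : machine_model) (e : nat) (sigma : seq nat) (n : nat)
  : bool := mrun M e n (fin_oracle sigma) (size sigma).

(* {e}^Z_t(n)| for infinite Z : halts in fewer than min(oo, t) = t steps. *)
Definition halts_inf (M : machine_model) (e : nat) (Z : nat -> nat) (t n : nat)
  : Prop := mrun M e n (inf_oracle Z) t.

Definition mu_inf (P : pred nat) : option nat :=
  match excluded_middle_informative (exists t, P t) with
  | left h => Some (ex_minn h)
  | right _ => None
  end.

(* tZ M Z 0 = t_{-1} = 1 ; tZ M Z n.+1 = t_n. *)
Fixpoint tZ (M : machine_model) (Z : nat -> nat) (k : nat) : nat :=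
  match k with
  | 0 => 1
  | n.+1 =>
      let prev := tZ M Z n in
      match mu_inf (fun t => mrun M n n (inf_oracle Z) t) with
      | Some m => maxn prev.+1 m
      | None => prev.+1
      end
  end.

Definition jumpZ (M : machine_model) (Z : nat -> nat) : nat -> nat :=
  fun n => code (mkseq Z (tZ M Z n.+1)).

Definition jumpZ_omega (M : machine_model) (Z : nat -> nat) : nat -> nat :=
  fun n => iter n.+1 (jumpZ M) Z 0.

(* mu t. {n}^{sigma|t}(n)| ; for t >= |sigma| the condition is that for
   t = |sigma|, so it suffices to search t in 0..|sigma|. *)
Definition mu_fin (M : machine_model) (sigma : seq nat) (n : nat) : option nat :=
  let P := fun t => halts_fin_nb M n (take t sigma) n in
  let ts := iota 0 (size sigma).+1 in
  if has P ts then Some (nth 0 ts (find P ts)) else None.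

(* tS M sigma 0 = t_{-1} = 1 ; tS M sigma n.+1 = t_n. *)
Fixpoint tS (M : machine_model) (sigma : seq nat) (k : nat) : nat :=
  match k with
  | 0 => 1
  | n.+1 =>
      let prev := tS M sigma n in
      match mu_fin M sigma n with
      | Some m => maxn prev.+1 m
      | None => prev.+1
      end
  end.

(* k = least index with t_k > |sigma| (exists below |sigma|+1 since t_n >= n+2). *)
Definition jlen (M : machine_model) (sigma : seq nat) : nat :=
  find (fun i => size sigma < tS M sigma i.+1) (iota 0 (size sigma).+1).

Definition jumpS (M : machine_model) (sigma : seq nat) : seq nat :=
  [seq code (take (tS M sigma i.+1) sigma) | i <- iota 0 (jlen M sigma)].

(* n = least with J^n(sigma) = empty (exists below |sigma|+1). *)
Definition jomega_len (M : machine_model) (sigma : seq nat) : nat :=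
  find (fun i => iter i (jumpS M) sigma == [::]) (iota 0 (size sigma).+1).

Definition jumpS_omega (M : machine_model) (sigma : seq nat) : seq nat :=
  [seq nth 0 (iter i (jumpS M) sigma) 0 | i <- iota 1 (jomega_len M sigma).-1].

Definition JT_omega (M : machine_model) (T : seq nat -> Prop) : seq nat -> Prop :=
  fun tau => exists sigma, T sigma /\ jumpS_omega M sigma = tau.

(* Main.v *)
Require Import Defs.
From mathcomp Require Import all_boot.
From Stdlib Require Import ClassicalEpsilon FunctionalExtensionality.

Set Implicit Arguments.
Unset Strict Implicit.
Unset Printing Implicit Defensive.

Section Aux.
Variable M : machine_model.

Lemma tS_lt s n : tS M s n < tS M s n.+1.
Proof. rewrite /=; case: (mu_fin M s n) => [a|] //; exact: leq_maxl. Qed.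

Lemma tZ_lt Z n : tZ M Z n < tZ M Z n.+1.
Proof. rewrite /=; case: (mu_inf _) => [a|] //; exact: leq_maxl. Qed.

Lemma tS_ge s n : n < tS M s n.
Proof. elim: n => [|n IH] //; exact: leq_ltn_trans IH (tS_lt s n). Qed.

Lemma tZ_ge Z n : n < tZ M Z n.
Proof. elim: n => [|n IH] //; exact: leq_ltn_trans IH (tZ_lt Z n). Qed.

Lemma tS_mono s m n : m <= n -> tS M s m <= tS M s n.
Proof.
move=> /subnKC <-; elim: (n - m) => [|d IH]; first by rewrite addn0.
rewrite addnS; apply: leq_trans IH (ltnW (tS_lt _ _)).
Qed.

Lemma tZ_mono Z m n : m <= n -> tZ M Z m <= tZ M Z n.
Proof.
move=> /subnKC <-; elim: (n - m) => [|d IH]; first by rewrite addn0.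
rewrite addnS; apply: leq_trans IH (ltnW (tZ_lt _ _)).
Qed.

Lemma find_iota_eq (P : pred nat) N k :
  k < N -> P k -> (forall i, i < k -> ~~ P i) -> find P (iota 0 N) = k.
Proof.
move=> kN Pk Hb.
have hasP : has P (iota 0 N) by apply/hasP; exists k => //; rewrite mem_iota.
have fl := find_size P (iota 0 N).
have := nth_find 0 hasP.
rewrite has_find size_iota in hasP.
rewrite nth_iota // add0n => Pf.
case: (ltngtP (find P (iota 0 N)) k) => // H.
- by move: (Hb _ H); rewrite Pf.
- by move: (before_find 0 H); rewrite nth_iota // add0n Pk.
Qed.

Lemma halts_agree (rho : seq nat) (Y : nat -> nat) e t :
  t <= size rho -> (forall i, i < t -> nth 0 rho i = Y i) ->
  halts_fin_nb M e (take t rho) e = mrun M e e (inf_oracle Y) t.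
Proof.
move=> tle Hag; rewrite /halts_fin_nb size_takel //.
apply: mrun_use => i it; rewrite /fin_oracle /inf_oracle size_takel // it.
by rewrite nth_take // Hag.
Qed.

Lemma mu_fin_some s e a :
  a <= size s -> halts_fin_nb M e (take a s) e ->
  (forall t, t < a -> ~~ halts_fin_nb M e (take t s) e) ->
  mu_fin M s e = Some a.
Proof.
move=> al Pa Hb; rewrite /mu_fin.
set P := (fun t => _).
have hasP : has P (iota 0 (size s).+1) by apply/hasP; exists a => //; rewrite mem_iota.
rewrite hasP; congr Some.
rewrite (@find_iota_eq P (size s).+1 a) //; by rewrite nth_iota.
Qed.

Lemma mu_fin_spec s e :
  match mu_fin M s e with
  | Some a => a <= size s /\ halts_fin_nb M e (take a s) e
  | None => forall t, t <= size s -> ~~ halts_fin_nb M e (take t s) e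
  end.
Proof.
rewrite /mu_fin; set P := (fun t => _).
case: ifP => [hasP|hasN].
- have := nth_find 0 hasP; have := hasP; rewrite has_find size_iota => fl.
  by rewrite nth_iota // add0n => Pf; split => //; rewrite -ltnS.
- move=> t tle; apply/negP => Pt; move/negP: hasN; apply; apply/hasP.
  by exists t => //; rewrite mem_iota.
Qed.

Lemma mu_inf_spec (P : pred nat) :
  match mu_inf P with
  | Some a => P a /\ forall t, t < a -> ~~ P t
  | None => forall t, ~~ P t
  end.
Proof.
rewrite /mu_inf; case: excluded_middle_informative => [h|h].
- case: (ex_minnP h) => a Pa Hm; split => // t ta; apply/negP => Pt.
  by have := Hm t Pt; rewrite leqNgt ta.
- by move=> t; apply/negP => Pt; apply: h; exists t.
Qed.


Lemma size_jumpS r : size (jumpS M r) = jlen M r.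
Proof. by rewrite /jumpS size_map size_iota. Qed.

Lemma jumpS_nth r k : k < jlen M r ->
  tS M r k.+1 <= size r /\ nth 0 (jumpS M r) k = code (take (tS M r k.+1) r).
Proof.
move=> kl; have kl' : k < (size r).+1.
  by apply: leq_trans kl _; rewrite /jlen -[X in _ <= X](size_iota 0); apply: find_size.
split.
- have := before_find 0 kl; rewrite nth_iota // add0n.
  by move/negbT; rewrite -leqNgt.
- by rewrite /jumpS (nth_map 0) ?size_iota // nth_iota.
Qed.

Lemma jumpS_small r : size r <= 1 -> jumpS M r = [::].
Proof.
move=> sr; rewrite /jumpS /jlen (@find_iota_eq _ _ 0) //.
by apply: leq_ltn_trans sr (tS_ge r 1).
Qed.

Lemma iter_nil k : iter k (jumpS M) [::] = [::].
Proof. by elim: k => [|k IH] //; rewrite iterS IH jumpS_small. Qed.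

Lemma mkseq_agree (Y : nat -> nat) L i : i < L -> nth 0 (mkseq Y L) i = Y i.
Proof. exact: nth_mkseq. Qed.

Lemma tS_nogarb Y L m : tZ M Y m <= L -> tS M (mkseq Y L) m = tZ M Y m.
Proof.
elim: m => [|m IH] // Hle.
have Hm : tZ M Y m <= L by apply: leq_trans (ltnW (tZ_lt Y m)) Hle.
move: Hle; rewrite /= -/(tZ M Y m) IH //.
have := mu_inf_spec (fun t => mrun M m m (inf_oracle Y) t).
have Hag : forall t, t <= L ->
  halts_fin_nb M m (take t (mkseq Y L)) m = mrun M m m (inf_oracle Y) t.
  move=> t tL; apply: halts_agree; first by rewrite size_mkseq.
  move=> i it; apply: nth_mkseq; exact: leq_trans it tL.
case E: (mu_inf _) => [a|] /=.
- move=> [Pa Hb] Hle.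
  have aL : a <= L by apply: leq_trans Hle; exact: leq_maxr.
  rewrite (@mu_fin_some (mkseq Y L) m a) ?size_mkseq ?Hag //.
  move=> t ta; rewrite Hag ?Hb //; exact: leq_trans (ltnW ta) aL.
- move=> Hn _; have := mu_fin_spec (mkseq Y L) m.
  case: (mu_fin _ _ _) => [a|] // [aL]; rewrite size_mkseq in aL.
  by rewrite Hag // (negbTE (Hn a)).
Qed.

Lemma take_mkseq' (Y : nat -> nat) t L : t <= L -> take t (mkseq Y L) = mkseq Y t.
Proof.
move=> tL; apply: (@eq_from_nth _ 0); rewrite ?size_takel ?size_mkseq //.
by move=> i it; rewrite nth_take // !nth_mkseq //; exact: leq_trans it tL.
Qed.

Lemma jumpS_fwd Y k : jumpS M (mkseq Y (tZ M Y k)) = mkseq (jumpZ M Y) k.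
Proof.
set r := mkseq Y _.
have Hr : forall i, i <= k -> tS M r i = tZ M Y i.
  by move=> i ik; apply: tS_nogarb; apply: tZ_mono.
have jl : jlen M r = k.
  rewrite /jlen; apply: find_iota_eq.
  - by rewrite ltnS size_mkseq; apply: ltnW; apply: tZ_ge.
  - by rewrite size_mkseq -(Hr k) //; apply: tS_lt.
  - move=> i ik; rewrite -leqNgt size_mkseq (Hr i.+1) //; exact: tZ_mono.
rewrite /jumpS jl /mkseq; apply/eq_in_map => i; rewrite mem_iota add0n => /andP [_ ik].
rewrite Hr // /r take_mkseq' //; exact: tZ_mono.
Qed.

End Aux.

Fixpoint lvl (M : machine_model) (Z : nat -> nat) (n d : nat) : nat :=
  match d with
  | 0 => 1
  | d'.+1 => tZ M (iter (n - d) (jumpZ M) Z) (lvl M Z n d')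
  end.

Lemma lvl_ge M Z n d : d < lvl M Z n d.
Proof. elim: d => [|d IH] //=; exact: leq_ltn_trans IH (tZ_ge _ _ _). Qed.

Lemma iter_lvl M Z n i : i <= n ->
  iter i (jumpS M) (mkseq Z (lvl M Z n n)) =
  mkseq (iter i (jumpZ M) Z) (lvl M Z n (n - i)).
Proof.
elim: i => [|i IH] Hi; first by rewrite subn0.
rewrite iterS IH ?(ltnW Hi) //.
have e : n - i = (n - i.+1).+1 by rewrite subnSK.
rewrite e /= -e subKn ?(ltnW Hi) //; exact: jumpS_fwd.
Qed.

Lemma fwd M (T : seq nat -> Prop) Z :
  body T Z -> body (JT_omega M T) (jumpZ_omega M Z).
Proof.
move=> hZ n; exists (mkseq Z (lvl M Z n n)); split; first exact: hZ.
rewrite /jumpS_omega /jomega_len.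
have jl : find (fun i => iter i (jumpS M) (mkseq Z (lvl M Z n n)) == [::])
           (iota 0 (size (mkseq Z (lvl M Z n n))).+1) = n.+1.
  apply: find_iota_eq.
  - by rewrite ltnS size_mkseq lvl_ge.
  - by rewrite iterS iter_lvl // subnn /= jumpS_small // size_mkseq.
  - move=> i ilt; rewrite iter_lvl // -?ltnS //.
    apply/eqP => h; have := congr1 size h; rewrite size_mkseq /=.
    by move=> e; have := lvl_ge M Z n (n - i); rewrite e.
rewrite jl /=; apply: (@eq_from_nth _ 0).
  by rewrite size_map size_iota size_mkseq.
move=> i; rewrite size_map size_iota => ilt.
rewrite (nth_map 0) ?size_iota // nth_iota // nth_mkseq // add1n iter_lvl //.
rewrite nth_mkseq //; exact: leq_ltn_trans (leq0n _) (lvl_ge _ _ _ _).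
Qed.

Section Bwd.
Variable M : machine_model.
Variable f : nat -> nat.
Variable sg : nat -> seq nat.
Hypothesis hsg : forall n, jumpS_omega M (sg n) = mkseq f n.

Definition rho j n := iter j (jumpS M) (sg n).

Lemma rhoS j n : rho j.+1 n = jumpS M (rho j n).
Proof. by rewrite /rho iterS. Qed.

Lemma base i n : i < n -> 0 < size (rho i.+1 n) /\ nth 0 (rho i.+1 n) 0 = f i.
Proof.
move=> iN; have h := hsg n.
have sz : size (jumpS_omega M (sg n)) = n by rewrite h size_mkseq.
move: sz; rewrite /jumpS_omega size_map size_iota /jomega_len => sz.
set P := (fun i => _) in sz.
have fe : find P (iota 0 (size (sg n)).+1) = n.+1.
  by move: sz; case: (find _ _) => [|k] /= e; [move: iN; rewrite -e | rewrite e].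
have fl := find_size P (iota 0 (size (sg n)).+1).
rewrite fe size_iota in fl.
have := @before_find _ 0 P (iota 0 (size (sg n)).+1) n; rewrite fe ltnSn nth_iota // add0n => /(_ isT).
rewrite /P => /negbT Hn; split.
- rewrite lt0n size_eq0; apply: contra Hn => /eqP e.
  by rewrite -[X in iter X](subnK iN) iterD; rewrite /rho in e; rewrite e iter_nil.
- have := congr1 (fun s => nth 0 s i) h; rewrite nth_mkseq // => <-.
  rewrite /jumpS_omega (nth_map 0) ?size_iota ?sz // nth_iota ?sz //.
Qed.

Lemma helper j L n n' : L < size (rho j.+1 n) -> L < size (rho j.+1 n') ->
  nth 0 (rho j.+1 n) L = nth 0 (rho j.+1 n') L ->
  [/\ tS M (rho j n) L.+1 = tS M (rho j n') L.+1,
      take (tS M (rho j n) L.+1) (rho j n) = take (tS M (rho j n') L.+1) (rho j n')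
    & tS M (rho j n) L.+1 <= size (rho j n)].
Proof.
rewrite !rhoS !size_jumpS => l1 l2.
have [t1 c1] := jumpS_nth l1; have [t2 c2] := jumpS_nth l2.
rewrite c1 c2 /code => /(can_inj CodeSeq.codeK) e; split => //.
by have := congr1 size e; rewrite !size_takel.
Qed.

Definition Stab j L N := forall n n', N <= n -> N <= n' ->
  L <= size (rho j n) /\ take L (rho j n) = take L (rho j n').

Lemma Stab_step j L N : Stab j.+1 L.+1 N -> Stab j L.+2 N.
Proof.
move=> H n n' hn hn'.
have [s1 e1] := H n n' hn hn'; have [s2 _] := H n' n hn' hn.
have e : nth 0 (rho j.+1 n) L = nth 0 (rho j.+1 n') L.
  by have := congr1 (fun s => nth 0 s L) e1; rewrite /= !nth_take.
have [et ek tl] := helper s1 s2 e.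
have g : L.+2 <= tS M (rho j n) L.+1 by apply: tS_ge.
split; first exact: leq_trans g tl.
by rewrite -(take_takel _ g) ek take_takel // -et.
Qed.

Lemma Stab_weak j L L' N : Stab j L N -> L' <= L -> Stab j L' N.
Proof.
move=> H le n n' hn hn'; have [s e] := H n n' hn hn'; split.
- exact: leq_trans le s.
- by rewrite -(take_takel _ le) e take_takel.
Qed.

Lemma Stab_base j : Stab j.+1 1 j.+1.
Proof.
move=> n n' hn hn'; have [s1 e1] := base hn; have [s2 e2] := base hn'.
split => //; move: s1 s2 e1 e2.
case: (rho j.+1 n) => [|a r] //. case: (rho j.+1 n') => [|b r'] //. move=> _ _ e1 e2. rewrite /= in e1 e2 *. by rewrite e1 e2 !take0.
Qed.

Lemma Stab_all L j : Stab j L (j + L).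
Proof.
case: L => [|L]; first by move=> n n' _ _; split; rewrite ?take0.
elim: L j => [|L IH] j.
- by apply: (Stab_weak (L := 2)) => //; rewrite addn1; apply: Stab_step; apply: Stab_base.
- by rewrite -addSnnS; apply: Stab_step; apply: IH.
Qed.

Definition W j i := nth 0 (rho j (j + i.+1)) i.

Lemma agree j A n : j + A <= n ->
  A <= size (rho j n) /\ forall i, i < A -> nth 0 (rho j n) i = W j i.
Proof.
move=> hn; split; first by have [] := @Stab_all A j n n hn hn.
move=> i iA.
have h1 : j + i.+1 <= n by apply: leq_trans hn; rewrite leq_add2l.
have [_ e] := @Stab_all i.+1 j n (j + i.+1) h1 (leqnn _).
by rewrite /W -(nth_take 0 (ltnSn i)) e nth_take.
Qed.

Lemma const_t j m n1 n2 : j + m.+2 <= n1 -> j + m.+2 <= n2 ->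
  tS M (rho j n1) m.+1 = tS M (rho j n2) m.+1.
Proof.
move=> h1 h2.
have h1' : j.+1 + m.+1 <= n1 by rewrite addSnnS.
have h2' : j.+1 + m.+1 <= n2 by rewrite addSnnS.
have [s1 e1] := @Stab_all m.+1 j.+1 n1 n2 h1' h2'.
have [s2 _] := @Stab_all m.+1 j.+1 n2 n1 h2' h1'.
have e : nth 0 (rho j.+1 n1) m = nth 0 (rho j.+1 n2) m.
  by have := congr1 (fun s => nth 0 s m) e1; rewrite /= !nth_take.
by have [] := helper s1 s2 e.
Qed.


Lemma tS_limit j m : forall n, j + m.+1 <= n -> tS M (rho j n) m = tZ M (W j) m.
Proof.
elim: m => [|m IH] n hn //.
have [b Hb] : exists b, forall a,
    mu_inf (fun t => mrun M m m (inf_oracle (W j)) t) = Some a -> a <= b.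
  by exists (odflt 0 (mu_inf (fun t => mrun M m m (inf_oracle (W j)) t))) => a ->.
pose S := tS M (rho j (j + m.+2)) m.+1.
pose A := S + b.
pose n' := j + (m.+2 + A).
have hn' : j + m.+2 <= n' by rewrite leq_add2l leq_addr.
have hA : j + A <= n' by rewrite leq_add2l leq_addl.
have [szA agA] := @agree j A n' hA.
rewrite (const_t hn hn').
have HS : tS M (rho j n') m.+1 <= A.
  by rewrite (const_t hn' (leqnn _)) leq_addr.
have IHn' : tS M (rho j n') m = tZ M (W j) m.
  by apply: IH; apply: leq_trans hn'; rewrite leq_add2l.
have Hag : forall t, t <= A ->
    halts_fin_nb M m (take t (rho j n')) m = mrun M m m (inf_oracle (W j)) t.
  move=> t tA; apply: halts_agree; first exact: leq_trans tA szA.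
  move=> i it; apply: agA; exact: leq_trans it tA.
move: HS; rewrite /= IHn'.
have := mu_inf_spec (fun t => mrun M m m (inf_oracle (W j)) t).
case E: (mu_inf _) => [a|].
- move=> [Pa Hbelow] _.
  have aA : a <= A by apply: leq_trans (Hb a E) (leq_addl _ _).
  rewrite (@mu_fin_some M (rho j n') m a) ?Hag //; first exact: leq_trans aA szA.
  move=> t ta; rewrite Hag ?Hbelow //; exact: leq_trans (ltnW ta) aA.
- move=> Hn; have := mu_fin_spec M (rho j n') m.
  case: (mu_fin _ _ _) => [a|] // [aS Pa] HS.
  case: (leqP a A) => aA; first by rewrite Hag // (negbTE (Hn a)) in Pa.
  by have := leq_trans (leq_maxr _ _) HS; rewrite leqNgt aA.
Qed.

Lemma W_jump j : W j.+1 =1 jumpZ M (W j).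
Proof.
move=> m.
pose s := tZ M (W j) m.+1.
pose n := j + m.+2 + s.
have hn : j.+1 + m.+1 <= n by rewrite addSnnS leq_addr.
have [sz e] := @Stab_all m.+1 j.+1 n (j.+1 + m.+1) hn (leqnn _).
have -> : W j.+1 m = nth 0 (rho j.+1 n) m.
  by rewrite /W -(nth_take 0 (ltnSn m)) -e nth_take.
move: sz; rewrite rhoS size_jumpS => sz.
have [tl ->] := jumpS_nth sz.
rewrite (tS_limit (n := n)); last by rewrite leq_addr.
have hs : j + s <= n by rewrite /n -addnA leq_add2l leq_addl.
have [szs ags] := @agree j s n hs.
rewrite /jumpZ; congr code; apply: (@eq_from_nth _ 0).
  by rewrite size_takel // size_mkseq.
move=> i; rewrite size_takel // => is_.
by rewrite nth_take // nth_mkseq // ags.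
Qed.

Lemma iter_W j : iter j (jumpZ M) (W 0) = W j.
Proof.
elim: j => [|j IH] //; rewrite iterS IH.
by apply: functional_extensionality => i; rewrite W_jump.
Qed.

End Bwd.

Theorem lemma5p14 (M : machine_model) (T : seq nat -> Prop) :
  is_tree T ->
  forall f : nat -> nat,
    body (JT_omega M T) f <-> exists Z : nat -> nat, body T Z /\ jumpZ_omega M Z = f.
Proof.
move=> hT f; split; last by move=> [Z [hZ <-]]; exact: fwd.
move=> hb.
pose sg n := proj1_sig (constructive_indefinite_description _ (hb n)).
have hs : forall n, T (sg n) /\ jumpS_omega M (sg n) = mkseq f n.
  by move=> n; rewrite /sg; case: (constructive_indefinite_description _ _).
have hsg : forall n, jumpS_omega M (sg n) = mkseq f n by move=> n; case: (hs n).
exists (W M sg 0); split.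
- move=> n; have [sz ag] := @agree M f sg hsg 0 n n (leqnn _).
  have -> : mkseq (W M sg 0) n = take n (sg n).
    apply: (@eq_from_nth _ 0); rewrite ?size_mkseq ?size_takel //.
    by move=> i ilt; rewrite nth_mkseq // nth_take // -ag.
  by apply: hT; case: (hs n).
- apply: functional_extensionality => i.
  rewrite /jumpZ_omega (iter_W hsg) /W.
  have hi : i < i.+1 + 1 by rewrite addn1.
  by have [_ ->] := base hsg hi.
Qed.
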